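(* Let $I\subset\mathbb{R}$ be an interval, let $a,b,c,d,f,g,h:I\to\mathbb{R}$ be given functions with $a(t)\neq0$ on $I$, and let $y\in\mathbb{R}$ be a parameter. Suppose $\mu>0,\alpha,\beta,\gamma,\delta,\varepsilon,\kappa_1,\kappa_2$ are differentiable functions on $I$ satisfying the modified Riccati system $$\alpha'+b=2c\alpha+4a\alpha^2,\quad \beta'=(c+4a\alpha)\beta,\quad \gamma'=a\beta^2,\quad \delta'+2\alpha g=(c+4a\alpha)\delta+f,$$ $$\varepsilon'=(2a\delta-g)\beta,\quad \kappa_1'=a\delta^2-g\delta+he^{\kappa_2},\quad \kappa_2'=-he^{\kappa_2},$$ together with $\alpha=-\dfrac{\mu'}{4a\mu}-\dfrac{d}{2a}$. Then $$\psi(x,t)=\frac{1}{\sqrt{\mu(t)}}e^{\alpha x^2+\beta xy+\gamma y^2+\delta x+\varepsilon y+\kappa_1},\qquad \varphi(x,t)=\frac{1}{\sqrt{\mu(t)}}e^{\alpha x^2+\beta xy+\gamma y^2+\delta x+\varepsilon y+\kappa_1+\kappa_2}$$ (with all coefficient functions evaluated at $t$) solve the system $$\psi_t=a(t)\psi_{xx}-(b(t)x^2-d(t)-xf(t))\psi-(g(t)-c(t)x)\psi_x+h(t)\varphi,$$ $$\varphi_t=a(t)\varphi_{xx}-(b(t)x^2-d(t)-xf(t))\varphi-(g(t)-c(t)x)\varphi_x.$$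
   Context: All functions are real-valued; primes denote derivatives with respect to $t$. *)

(* Defs.v *)
From Stdlib Require Import Reals.
From Coquelicot Require Import Coquelicot.
Open Scope R_scope.

Definition in_interval (lo hi : Rbar) (t : R) : Prop :=
  Rbar_lt lo t /\ Rbar_lt t hi.

Definition expo (alpha beta gamma delta eps kappa1 : R -> R) (y x t : R) : R :=
  alpha t * x ^ 2 + beta t * x * y + gamma t * y ^ 2 + delta t * x
  + eps t * y + kappa1 t.

Definition psi_sol (mu alpha beta gamma delta eps kappa1 : R -> R) (y x t : R) : R :=
  / sqrt (mu t) * exp (expo alpha beta gamma delta eps kappa1 y x t).

Definition phi_sol (mu alpha beta gamma delta eps kappa1 kappa2 : R -> R)
  (y x t : R) : R :=
  / sqrt (mu t) * exp (expo alpha beta gamma delta eps kappa1 y x t + kappa2 t).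

(* Main.v *)
Require Import Defs.
From Stdlib Require Import Reals Lra.
From Coquelicot Require Import Coquelicot.
Open Scope R_scope.

Lemma dx1 mu alpha beta gamma delta eps kappa1 y t z :
  is_derive (fun z => psi_sol mu alpha beta gamma delta eps kappa1 y z t) z
   ((2*alpha t*z + beta t*y + delta t) * psi_sol mu alpha beta gamma delta eps kappa1 y z t).
Proof. unfold psi_sol, expo. auto_derive; [easy|cbn [pow]; ring]. Qed.

Lemma dx2 mu alpha beta gamma delta eps kappa1 y t z :
  is_derive (fun z => (2*alpha t*z + beta t*y + delta t) * psi_sol mu alpha beta gamma delta eps kappa1 y z t) z
   (((2*alpha t*z + beta t*y + delta t)^2 + 2*alpha t) * psi_sol mu alpha beta gamma delta eps kappa1 y z t).
Proof. unfold psi_sol, expo. auto_derive; [easy|cbn [pow]; ring]. Qed.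

Lemma dt mu alpha beta gamma delta eps kappa1 y x t :
  0 < mu t -> ex_derive mu t -> ex_derive alpha t -> ex_derive beta t ->
  ex_derive gamma t -> ex_derive delta t -> ex_derive eps t -> ex_derive kappa1 t ->
  is_derive (fun s => psi_sol mu alpha beta gamma delta eps kappa1 y x s) t
   ((- Derive mu t / (2 * mu t) + (Derive alpha t * x^2 + Derive beta t * x * y + Derive gamma t * y^2
      + Derive delta t * x + Derive eps t * y + Derive kappa1 t)) * psi_sol mu alpha beta gamma delta eps kappa1 y x t).
Proof.
  intros Hm H1 H2 H3 H4 H5 H6 H7. unfold psi_sol, expo.
  assert (Hs := sqrt_lt_R0 _ Hm).
  auto_derive.
  - repeat split; auto; lra.
  - change (fun x0 : R => mu x0) with mu. change (fun x0 : R => alpha x0) with alpha.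
    change (fun x0 : R => beta x0) with beta. change (fun x0 : R => gamma x0) with gamma.
    change (fun x0 : R => delta x0) with delta. change (fun x0 : R => eps x0) with eps.
    change (fun x0 : R => kappa1 x0) with kappa1.
    replace (2 * mu t) with (2*(sqrt(mu t)*sqrt(mu t))) by (rewrite sqrt_sqrt; lra).
    cbn [pow]. field. lra.
Qed.

Lemma der_change (f : R -> R) (x l l' : R) : is_derive f x l -> l = l' -> is_derive f x l'.
Proof. intros; subst; auto. Qed.

Lemma dx1p mu alpha beta gamma delta eps kappa1 kappa2 y t z :
  is_derive (fun z => phi_sol mu alpha beta gamma delta eps kappa1 kappa2 y z t) z
   ((2*alpha t*z + beta t*y + delta t) * phi_sol mu alpha beta gamma delta eps kappa1 kappa2 y z t).
Proof. unfold phi_sol, expo. auto_derive; [easy|cbn [pow]; ring]. Qed.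

Lemma dx2p mu alpha beta gamma delta eps kappa1 kappa2 y t z :
  is_derive (fun z => (2*alpha t*z + beta t*y + delta t) * phi_sol mu alpha beta gamma delta eps kappa1 kappa2 y z t) z
   (((2*alpha t*z + beta t*y + delta t)^2 + 2*alpha t) * phi_sol mu alpha beta gamma delta eps kappa1 kappa2 y z t).
Proof. unfold phi_sol, expo. auto_derive; [easy|cbn [pow]; ring]. Qed.

Lemma phi_eq mu alpha beta gamma delta eps kappa1 kappa2 y z t :
  phi_sol mu alpha beta gamma delta eps kappa1 kappa2 y z t =
  psi_sol mu alpha beta gamma delta eps kappa1 y z t * exp (kappa2 t).
Proof. unfold phi_sol, psi_sol. rewrite exp_plus. ring. Qed.

Lemma dtphi mu alpha beta gamma delta eps kappa1 kappa2 y x t :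
  0 < mu t -> ex_derive mu t -> ex_derive alpha t -> ex_derive beta t ->
  ex_derive gamma t -> ex_derive delta t -> ex_derive eps t -> ex_derive kappa1 t ->
  ex_derive kappa2 t ->
  is_derive (fun s => phi_sol mu alpha beta gamma delta eps kappa1 kappa2 y x s) t
   ((- Derive mu t / (2 * mu t) + (Derive alpha t * x^2 + Derive beta t * x * y + Derive gamma t * y^2
      + Derive delta t * x + Derive eps t * y + Derive kappa1 t) + Derive kappa2 t)
     * psi_sol mu alpha beta gamma delta eps kappa1 y x t * exp (kappa2 t)).
Proof.
  intros Hm H1 H2 H3 H4 H5 H6 H7 H8.
  eapply is_derive_ext. { intros s. symmetry. apply phi_eq. }
  eapply der_change. { apply (is_derive_mult (fun s => psi_sol mu alpha beta gamma delta eps kappa1 y x s) (fun s => exp (kappa2 s))).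
   - apply dt; auto.
   - auto_derive. exact H8. reflexivity.
   - intros; apply Rmult_comm. }
  simpl. unfold mult, plus; simpl. change (fun x0 : R => kappa2 x0) with kappa2. ring.
Qed.

Theorem theorem2
  (lo hi : Rbar) (a b c d f g h : R -> R) (y : R)
  (mu alpha beta gamma delta eps kappa1 kappa2 : R -> R) :
  (forall t, in_interval lo hi t -> a t <> 0) ->
  (forall t, in_interval lo hi t -> 0 < mu t) ->
  (forall t, in_interval lo hi t ->
     ex_derive mu t /\ ex_derive alpha t /\ ex_derive beta t /\
     ex_derive gamma t /\ ex_derive delta t /\ ex_derive eps t /\
     ex_derive kappa1 t /\ ex_derive kappa2 t) ->
  (forall t, in_interval lo hi t ->
     Derive alpha t + b t = 2 * c t * alpha t + 4 * a t * alpha t ^ 2 /\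
     Derive beta t = (c t + 4 * a t * alpha t) * beta t /\
     Derive gamma t = a t * beta t ^ 2 /\
     Derive delta t + 2 * alpha t * g t
       = (c t + 4 * a t * alpha t) * delta t + f t /\
     Derive eps t = (2 * a t * delta t - g t) * beta t /\
     Derive kappa1 t = a t * delta t ^ 2 - g t * delta t + h t * exp (kappa2 t) /\
     Derive kappa2 t = - (h t * exp (kappa2 t)) /\
     alpha t = - (Derive mu t / (4 * a t * mu t)) - d t / (2 * a t)) ->
  forall x t, in_interval lo hi t ->
    let psi := psi_sol mu alpha beta gamma delta eps kappa1 y in
    let phi := phi_sol mu alpha beta gamma delta eps kappa1 kappa2 y in
    ex_derive_n (fun z => psi z t) 2 x /\
    ex_derive_n (fun z => phi z t) 2 x /\
    is_derive (fun s => psi x s) t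
      (a t * Derive_n (fun z => psi z t) 2 x
       - (b t * x ^ 2 - d t - x * f t) * psi x t
       - (g t - c t * x) * Derive (fun z => psi z t) x
       + h t * phi x t) /\
    is_derive (fun s => phi x s) t
      (a t * Derive_n (fun z => phi z t) 2 x
       - (b t * x ^ 2 - d t - x * f t) * phi x t
       - (g t - c t * x) * Derive (fun z => phi z t) x).
Proof.
  intros Ha Hmu Hex Hsys x t Ht psi phi.
  destruct (Hex t Ht) as (E1&E2&E3&E4&E5&E6&E7&E8).
  destruct (Hsys t Ht) as (S1&S2&S3&S4&S5&S6&S7&S8).
  specialize (Ha t Ht). specialize (Hmu t Ht).
  set (L := 2*alpha t*x + beta t*y + delta t).
  assert (Dpsi : forall z, Derive (fun z => psi z t) z = (2*alpha t*z + beta t*y + delta t) * psi z t).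
  { intros z. apply is_derive_unique. apply dx1. }
  assert (Dphi : forall z, Derive (fun z => phi z t) z = (2*alpha t*z + beta t*y + delta t) * phi z t).
  { intros z. apply is_derive_unique. apply dx1p. }
  assert (D2psi : is_derive (fun z => Derive (fun z => psi z t) z) x
     (((2*alpha t*x + beta t*y + delta t)^2 + 2*alpha t) * psi x t)).
  { eapply is_derive_ext. { intros z. symmetry. apply Dpsi. } apply dx2. }
  assert (D2phi : is_derive (fun z => Derive (fun z => phi z t) z) x
     (((2*alpha t*x + beta t*y + delta t)^2 + 2*alpha t) * phi x t)).
  { eapply is_derive_ext. { intros z. symmetry. apply Dphi. }
    apply dx2p. }
  assert (Dmu : Derive mu t = - 4 * a t * mu t * alpha t - 2 * d t * mu t).
  { rewrite S8. field. split; lra. }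
  assert (Dal : Derive alpha t = 2 * c t * alpha t + 4 * a t * alpha t ^ 2 - b t) by lra.
  split; [|split; [|split]].
  - simpl. eexists. exact D2psi.
  - simpl. eexists. exact D2phi.
  - eapply der_change. { apply dt; auto. }
    change (Derive_n (fun z => psi z t) 2 x) with (Derive (fun z => Derive (fun z => psi z t) z) x).
    replace (Derive (fun z : R => Derive (fun z0 : R => psi z0 t) z) x) with
      (((2*alpha t*x + beta t*y + delta t)^2 + 2*alpha t) * psi x t)
      by (symmetry; apply is_derive_unique; exact D2psi).
    rewrite Dpsi.
    unfold phi. rewrite phi_eq. fold psi.
    rewrite Dmu, Dal, S2, S3, S6, S5.
    replace (Derive delta t) with ((c t + 4 * a t * alpha t) * delta t + f t - 2 * alpha t * g t) by lra.
    field. lra.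
  - eapply der_change. { apply dtphi; auto. }
    change (Derive_n (fun z => phi z t) 2 x) with (Derive (fun z => Derive (fun z => phi z t) z) x).
    replace (Derive (fun z : R => Derive (fun z0 : R => phi z0 t) z) x) with
      (((2*alpha t*x + beta t*y + delta t)^2 + 2*alpha t) * phi x t)
      by (symmetry; apply is_derive_unique; exact D2phi).
    rewrite Dphi.
    unfold phi. rewrite phi_eq. fold psi.
    rewrite Dmu, Dal, S2, S3, S6, S5, S7.
    replace (Derive delta t) with ((c t + 4 * a t * alpha t) * delta t + f t - 2 * alpha t * g t) by lra.
    field. lra.
Qed.
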